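(* Let $R$ be a domain which is a D-K elementary divisor ring. Then $R$ is a ring of simple range 2.
   Context: All rings are associative with nonzero identity. For $x\in R$, $RxR$ denotes the two-sided ideal generated by $x$. A nonzero element $a\in R$ is invariant if $aR=Ra$. Two matrices $A,B$ over $R$ are equivalent if $B=PAQ$ for some invertible matrices $P,Q$ over $R$. $R$ is a D-K elementary divisor ring if every (rectangular) matrix $A$ over $R$ is equivalent to a matrix $\mathrm{diag}(\varepsilon_1,\dots,\varepsilon_r,0,\dots,0)$ such that $R\varepsilon_{i+1}R\subseteq \varepsilon_iR\cap R\varepsilon_i$ for all $i=1,\dots,r-1$ and $\varepsilon_1,\dots,\varepsilon_{r-1}$ are invariant elements. A ring $R$ is called a ring of simple range 2 if for all $a,b,c\in R$ with $c\neq 0$ and $RaR+RbR+RcR=R$ there exist $p,q\in R$ such that $R(pa+qb)R+RpcR=R$. *)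

(* Defs.v *)
From HB Require Import structures.
From mathcomp Require Import all_boot all_order all_algebra.
Set Implicit Arguments. Unset Strict Implicit. Unset Printing Implicit Defensive.
Import GRing.Theory.
Local Open Scope ring_scope.

Definition is_domain (R : nzRingType) : Prop :=
  forall a b : R, a * b = 0 -> a = 0 \/ b = 0.

Definition in_ideal2 (R : nzRingType) (x y : R) : Prop :=
  exists n (r s : 'I_n -> R), y = \sum_(i < n) r i * x * s i.

Definition ideals3_full (R : nzRingType) (a b c : R) : Prop :=
  forall y : R, exists u v w, [/\ in_ideal2 a u, in_ideal2 b v, in_ideal2 c w
                              & y = u + v + w].

Definition ideals2_full (R : nzRingType) (a b : R) : Prop :=
  forall y : R, exists u v, [/\ in_ideal2 a u, in_ideal2 b v & y = u + v].

Definition invariant_elt (R : nzRingType) (a : R) : Prop :=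
  [/\ a != 0,
      (forall x : R, exists y, a * x = y * a) &
      (forall x : R, exists y, x * a = a * y)].

Definition invertible_mx (R : nzRingType) (n : nat) (P : 'M[R]_n) : Prop :=
  exists P' : 'M[R]_n, P *m P' = 1%:M /\ P' *m P = 1%:M.

Definition rdiag_mx (R : nzRingType) (m n r : nat) (eps : nat -> R) : 'M[R]_(m, n) :=
  \matrix_(i < m, j < n) (if (i == j :> nat) && (i < r)%N then eps i else 0).

(* D-K elementary divisor ring (entries indexed from 0). *)
Definition DK_elementary_divisor_ring (R : nzRingType) : Prop :=
  forall (m n : nat) (A : 'M[R]_(m, n)),
  exists (P : 'M[R]_m) (Q : 'M[R]_n) (r : nat) (eps : nat -> R),
    [/\ invertible_mx P, invertible_mx Q,
        (r <= minn m n)%N,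
        P *m A *m Q = rdiag_mx m n r eps
      & (forall i, (i.+1 < r)%N ->
           invariant_elt (eps i) /\
           (forall z, in_ideal2 (eps i.+1) z ->
              (exists t, z = eps i * t) /\ (exists t, z = t * eps i)))].

Definition simple_range2 (R : nzRingType) : Prop :=
  forall a b c : R, c != 0 -> ideals3_full a b c ->
  exists p q : R, ideals2_full (p * a + q * b) (p * c).

(* Main.v *)
Require Import Defs.
From mathcomp Require Import all_boot all_order all_algebra.
Set Implicit Arguments. Unset Strict Implicit. Unset Printing Implicit Defensive.
Import GRing.Theory.
Local Open Scope ring_scope.

Section Ideals.
Variable R : nzRingType.
Implicit Types x y z t : R.

Lemma id_self x : in_ideal2 x x.
Proof. exists 1%N, (fun _ => 1), (fun _ => 1); by rewrite big_ord1 mul1r mulr1. Qed.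

Lemma id_0 x : in_ideal2 x 0.
Proof. exists 0%N, (fun _ => 0), (fun _ => 0); by rewrite big_ord0. Qed.

Lemma id_add x y z : in_ideal2 x y -> in_ideal2 x z -> in_ideal2 x (y + z).
Proof.
move=> [n1 [r1 [s1 ->]]] [n2 [r2 [s2 ->]]].
exists (n1 + n2)%N,
  (fun i => match split i with inl j => r1 j | inr k => r2 k end),
  (fun i => match split i with inl j => s1 j | inr k => s2 k end).
rewrite big_split_ord /=.
congr (_ + _); apply: eq_bigr => i _.
- by have := unsplitK (inl i : 'I_n1 + 'I_n2) => /= ->.
- by have := unsplitK (inr i : 'I_n1 + 'I_n2) => /= ->.
Qed.

Lemma id_mull x y t : in_ideal2 x y -> in_ideal2 x (t * y).
Proof.
move=> [n [r [s ->]]]; exists n, (fun i => t * r i), s.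
rewrite mulr_sumr; apply: eq_bigr => i _; by rewrite !mulrA.
Qed.

Lemma id_mulr x y t : in_ideal2 x y -> in_ideal2 x (y * t).
Proof.
move=> [n [r [s ->]]]; exists n, r, (fun i => s i * t).
rewrite mulr_suml; apply: eq_bigr => i _; by rewrite !mulrA.
Qed.

Lemma id_sum x n (F : 'I_n -> R) : (forall i, in_ideal2 x (F i)) ->
  in_ideal2 x (\sum_(i < n) F i).
Proof.
move=> H; apply: (big_ind (in_ideal2 x)); [exact: id_0|exact: id_add|].
move=> i _; exact: H.
Qed.

Lemma id_trans x y z : in_ideal2 x y -> in_ideal2 y z -> in_ideal2 x z.
Proof.
move=> Hy [n [r [s ->]]]; apply: id_sum => i.
by apply: id_mulr; apply: id_mull.
Qed.

Lemma id_lin e f g s1 s2 z : e = f * s1 + g * s2 -> in_ideal2 e z ->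
  exists u v, [/\ in_ideal2 f u, in_ideal2 g v & z = u + v].
Proof.
move=> He [n [r [s ->]]].
exists (\sum_(i < n) r i * f * (s1 * s i)), (\sum_(i < n) r i * g * (s2 * s i)).
split; [apply: id_sum => i; apply: id_mulr; apply: id_mull; exact: id_self
       |apply: id_sum => i; apply: id_mulr; apply: id_mull; exact: id_self|].
rewrite -big_split /=; apply: eq_bigr => i _.
by rewrite He mulrDr mulrDl !mulrA.
Qed.

End Ideals.

Theorem theorem3p3 (R : nzRingType) :
  is_domain R -> DK_elementary_divisor_ring R -> simple_range2 R.
Proof.
move=> _ HDK a b c _ H3.
pose A : 'M[R]_(2, 2) := \matrix_(i < 2, j < 2)
  (if i == 0 :> nat then (if j == 0 :> nat then a else c)
   else (if j == 0 :> nat then b else 0)).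
have [P [Q [r [eps [[P' [_ HP'P]] [Q' [HQQ' _]] _ HD Hcond]]]]] := HDK 2%N 2%N A.
set D := rdiag_mx 2 2 r eps in HD.
set e := D 0 0.
exists (P 0 0), (P 0 1).
have HDe : forall i j, in_ideal2 e (D i j).
  move=> i j; rewrite /D /rdiag_mx mxE.
  case: ifP => [/andP [/eqP Hij Hir] | _]; last exact: id_0.
  case: i Hij Hir => [[|[|k]] Hi] //= Hj Hir.
  - have -> : eps 0%N = e by rewrite /e /D /rdiag_mx mxE /= Hir.
    exact: id_self.
  - have [_ Hz] := Hcond 0%N Hir.
    have [[t Ht] _] := Hz _ (id_self (eps 1%N)).
    rewrite Ht; apply: id_mulr.
    have -> : eps 0%N = e.
      by rewrite /e /D /rdiag_mx mxE /= (ltn_trans _ Hir).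
    exact: id_self.
have HA : A = P' *m D *m Q'.
  by rewrite -HD !mulmxA HP'P mul1mx -!mulmxA HQQ' mulmx1.
have HAe : forall i j, in_ideal2 e (A i j).
  move=> i j; rewrite HA !mxE; apply: id_sum => l; apply: id_mulr.
  rewrite mxE; apply: id_sum => k; apply: id_mull; exact: HDe.
have He : e = (P 0 0 * a + P 0 1 * b) * Q 0 0 + (P 0 0 * c) * Q 1 0.
  rewrite /e -HD !mxE !big_ord_recl !big_ord0 !mxE !big_ord_recl !big_ord0 !mxE /=.
  have -> : lift ord0 ord0 = 1 :> 'I_2 by apply: val_inj.
  have -> : ord0 = 0 :> 'I_2 by apply: val_inj.
  by rewrite !addr0 mulr0 addr0.
have H1 : in_ideal2 e 1.
  have [u [v [w [Hu Hv Hw ->]]]] := H3 1.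
  have Ha : in_ideal2 e a by have := HAe 0 0; rewrite mxE /=.
  have Hb : in_ideal2 e b by have := HAe (@Ordinal 2 1 isT) ord0; rewrite mxE /=.
  have Hc : in_ideal2 e c by have := HAe ord0 (@Ordinal 2 1 isT); rewrite mxE /=.
  apply: id_add; [apply: id_add|]; [exact: id_trans Ha Hu|exact: id_trans Hb Hv|exact: id_trans Hc Hw].
move=> y.
rewrite -[y]mul1r; exact: (id_lin He (id_mulr y H1)).
Qed.
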